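(* There are infinitely many positive integers $N$ for which there is no representation $N=A/B$ with $A,B$ antipalindromic numbers.
   Context: A positive integer $n$ is antipalindromic if its binary representation $w=w_1\cdots w_L$ (most significant digit first, no leading zeros) has even length $L$ and satisfies $w_i+w_{L+1-i}=1$ for all $i$. *)

(* Defs.v *)
From mathcomp Require Import all_boot.

Definition binlen (n : nat) : nat := (trunc_log 2 n).+1.

Definition bit (n j : nat) : nat := (n %/ 2 ^ j) %% 2.

(* n is antipalindromic: n > 0, its binary representation w_1..w_L
   (w_1 most significant) has even length L and w_i + w_{L+1-i} = 1.
   With w_i = bit n (L - i), the condition for i = 1..L reads
   bit n j + bit n (L-1-j) = 1 for j = 0..L-1. *)
Definition antipalindromic (n : nat) : bool :=
  [&& 0 < n, ~~ odd (binlen n) &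
      all (fun j => bit n j + bit n ((binlen n).-1 - j) == 1) (iota 0 (binlen n))].

(* Main.v *)
Require Import Defs.
From mathcomp Require Import all_boot.
From mathcomp Require Import zify.

Lemma bit0_of_dvd n j : 2 ^ j.+1 %| n -> bit n j = 0.
Proof.
move/dvdnP=> [k ->]; rewrite /bit expnS mulnA mulnK ?expn_gt0 //.
by rewrite modnMl.
Qed.

Lemma bit_shift B m j : m <= j -> bit (B * 2 ^ m) j = bit B (j - m).
Proof.
move=> hmj; rewrite /bit -{1}(subnK hmj) expnD divnMr ?expn_gt0 //.
Qed.

Lemma binlen_shift B m : 0 < B -> binlen (B * 2 ^ m) = binlen B + m.
Proof.
move=> hB; rewrite /binlen; congr S.
apply: trunc_log_eq => //.
have /andP[h1 h2] := trunc_log_bounds (isT : 1 < 2) hB.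
rewrite !expnD -addSn expnD; apply/andP; split.
  by rewrite leq_mul2r h1 orbT.
by rewrite ltn_mul2r expn_gt0 h2.
Qed.

Lemma antiP n j : antipalindromic n -> j < binlen n ->
  bit n j + bit n ((binlen n).-1 - j) = 1.
Proof.
move=> /and3P[_ _ /allP H] hj; apply/eqP; apply: H.
by rewrite mem_iota add0n.
Qed.

Theorem theorem18 :
  forall M : nat, exists N : nat, M < N /\
    ~ (exists A B : nat, antipalindromic A /\ antipalindromic B /\ A = N * B).
Proof.
move=> M; exists (2 ^ M.+1); split; first by apply: (ltn_trans (ltn_expl M (isT : 1 < 2))); rewrite ltn_exp2l.
move=> [A [B [hA [hB hAB]]]].
have B0 : 0 < B by case/and3P: hB.
rewrite mulnC in hAB; subst A.
set m := M.+1.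
set t := logn 2 B.
have dvt : 2 ^ t %| B := pfactor_dvdnn 2 B.
have ndvt : ~~ (2 ^ t.+1 %| B) by rewrite pfactor_dvdn // ltnn.
have bt : bit B t = 1.
  move: dvt ndvt => /dvdnP[q hq]; rewrite /bit hq mulnK ?expn_gt0 //.
  rewrite expnS dvdn_pmul2r ?expn_gt0 // dvdn2 modn2.
  by case: (odd q).
have tL : t < binlen B.
  rewrite /binlen ltnS; apply: trunc_log_max => //.
  exact: dvdn_leq.
have h1 := antiP _ _ hB tL.
rewrite bt in h1.
have tL2 : t < binlen (B * 2 ^ m) by rewrite binlen_shift //; lia.
have h2 := antiP _ _ hA tL2.
rewrite binlen_shift // in h2.
have bA : bit (B * 2 ^ m) t = 0.
  apply: bit0_of_dvd; rewrite expnS.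
  rewrite mulnC; apply: dvdn_mul => //.
  by rewrite /m expnS dvdn_mulr.
rewrite bA in h2; move: h2 => h2'.
rewrite bit_shift in h2'; last by rewrite /m; lia.
rewrite (_ : (binlen B + m).-1 - t - m = (binlen B).-1 - t) in h2'; last by lia.
lia.
Qed.
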